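(* Let $b\ge2$ and let $d$ be a base-$b$ martingale with $d(\lambda)=1$ and $d(w)\le |w|^c$ for all nonempty $w$. Then there is $c'>0$ such that for every sufficiently long $y\in\{0,1\}^*$, with $m(y)=\lceil |y|/\log_2 b+c'\log_2|y|\rceil$, \[|d^{(2)}(y)-d^{(2)}_{m(y)}(y)|\le 1/|y|^3,\] where $d^{(2)}(y)=2^{|y|}\mu(y)$ and $d^{(2)}_m(y)=2^{|y|}\mu_m(y)$.
   Context: $\Sigma_b=\{0,\dots,b-1\}$. A base-$b$ martingale is $d:\Sigma_b^*\to[0,\infty)$ with $d(w)=\frac1b\sum_{a}d(wa)$. $[w]_b=[x,x+b^{-|w|})$ with $x=\sum_{i=1}^{|w|}w[i-1]b^{-i}$, similarly $[y]_2$. $\gamma(w)=b^{-|w|}d(w)$ extends to a Borel probability measure $\hat\gamma$ on $[0,1)$ with $\hat\gamma([w]_b)=\gamma(w)$; $\mu(y)=\hat\gamma([y]_2)$; $\mu_m(y)=\sum\{\gamma(w):|w|=m,\ [w]_b\cap[y]_2\ne\emptyset\}$. *)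

(* Defs.v *)
From Stdlib Require Import Reals Lra Lia List ClassicalEpsilon.
Import ListNotations.
Open Scope R_scope.

Definition is_word (b : nat) (w : list nat) : Prop := Forall (fun a => (a < b)%nat) w.

Fixpoint words (b m : nat) : list (list nat) :=
  match m with
  | O => [ [] ]
  | S m' => flat_map (fun w => map (fun a => w ++ [a]) (seq 0 b)) (words b m')
  end.

Definition sumR {A} (f : A -> R) (l : list A) : R :=
  fold_right (fun x acc => f x + acc) 0 l.

Definition martingale (b : nat) (d : list nat -> R) : Prop :=
  (forall w, is_word b w -> 0 <= d w) /\
  (forall w, is_word b w ->
     d w = / INR b * sumR (fun a => d (w ++ [a])) (seq 0 b)).

(* left endpoint x = sum_i w[i] b^{-(i+1)} of [w]_b *)
Fixpoint left_pt (b : nat) (w : list nat) : R :=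
  match w with
  | [] => 0
  | a :: w' => (INR a + left_pt b w') / INR b
  end.

Definition in_cyl (b : nat) (w : list nat) (z : R) : Prop :=
  left_pt b w <= z < left_pt b w + / INR b ^ length w.

Definition gamma (b : nat) (d : list nat -> R) (w : list nat) : R :=
  d w / INR b ^ length w.

Definition ifP (P : Prop) (x : R) : R :=
  if excluded_middle_informative P then x else 0.

Definition cdf_approx (b : nat) (d : list nat -> R) (t : R) (m : nat) : R :=
  sumR (fun w => ifP (left_pt b w + / INR b ^ m <= t) (gamma b d w)) (words b m).

(* F(t) = gammahat([0,t)) = lim_m cdf_approx (continuity from below) *)
Definition cdf (b : nat) (d : list nat -> R) (t : R) : R :=
  epsilon (inhabits 0) (fun l => Un_cv (cdf_approx b d t) l).

(* mu(y) = gammahat([y]_2) *)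
Definition mu (b : nat) (d : list nat -> R) (y : list nat) : R :=
  cdf b d (left_pt 2 y + / 2 ^ length y) - cdf b d (left_pt 2 y).

Definition mu_m (b : nat) (d : list nat -> R) (m : nat) (y : list nat) : R :=
  sumR (fun w => ifP (exists z, in_cyl b w z /\ in_cyl 2 y z) (gamma b d w))
       (words b m).

Definition dd2 (b : nat) (d : list nat -> R) (y : list nat) : R :=
  2 ^ length y * mu b d y.

Definition dd2_m (b : nat) (d : list nat -> R) (m : nat) (y : list nat) : R :=
  2 ^ length y * mu_m b d m y.

Definition log2 (x : R) : R := ln x / ln 2.

Definition ceilZ (r : R) : Z := (- Int_part (- r))%Z.

Definition m_of (b : nat) (c' : R) (y : list nat) : nat :=
  Z.to_nat (ceilZ (INR (length y) / log2 (INR b) + c' * log2 (INR (length y)))).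

(* Main.v *)
Require Import Defs.
From Stdlib Require Import Reals List.
From Stdlib Require Import Lra Lia ZArith ClassicalEpsilon Classical.
Import ListNotations.
Open Scope R_scope.

Lemma ifP_T (P : Prop) x : P -> ifP P x = x.
Proof. intros H; unfold ifP; destruct (excluded_middle_informative P); tauto. Qed.
Lemma ifP_F (P : Prop) x : ~ P -> ifP P x = 0.
Proof. intros H; unfold ifP; destruct (excluded_middle_informative P); tauto. Qed.

Lemma sumR_app {A : Type} (f : A -> R) l1 l2 : sumR f (l1 ++ l2) = sumR f l1 + sumR f l2.
Proof. induction l1; simpl; [lra|]. rewrite IHl1; lra. Qed.
Lemma sumR_flat_map {A B : Type} (f : B -> R) (g : A -> list B) l :
  sumR f (flat_map g l) = sumR (fun x => sumR f (g x)) l.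
Proof. induction l; simpl; [lra|]. rewrite sumR_app, IHl; lra. Qed.
Lemma sumR_map {A B : Type} (f : B -> R) (g : A -> B) l :
  sumR f (map g l) = sumR (fun x => f (g x)) l.
Proof. induction l; simpl; [lra|]. rewrite IHl; lra. Qed.
Lemma sumR_le {A : Type} (f g : A -> R) l : (forall x, In x l -> f x <= g x) -> sumR f l <= sumR g l.
Proof. induction l; simpl; intros H; [lra|].
  pose proof (H a (or_introl eq_refl)). pose proof (IHl (fun x h => H x (or_intror h))). lra. Qed.
Lemma sumR_ext {A : Type} (f g : A -> R) l : (forall x, In x l -> f x = g x) -> sumR f l = sumR g l.
Proof. intros H; apply Rle_antisym; apply sumR_le; intros x hx; rewrite (H x hx); lra. Qed.
Lemma sumR_minus {A : Type} (f g : A -> R) l : sumR (fun x => f x - g x) l = sumR f l - sumR g l.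
Proof. induction l; simpl; [lra|]. rewrite IHl; lra. Qed.
Lemma sumR_scal {A : Type} (f : A -> R) k l : sumR (fun x => k * f x) l = k * sumR f l.
Proof. induction l; simpl; [lra|]. rewrite IHl; lra. Qed.
Lemma sumR_ge0 {A : Type} (f : A -> R) l : (forall x, In x l -> 0 <= f x) -> 0 <= sumR f l.
Proof. induction l; simpl; intros H; [lra|].
  pose proof (H a (or_introl eq_refl)). pose proof (IHl (fun x h => H x (or_intror h))). lra. Qed.


Lemma words_S b m : words b (S m) = flat_map (fun w => map (fun a => w ++ [a]) (seq 0 b)) (words b m).
Proof. reflexivity. Qed.

Lemma words_in b m w : In w (words b m) -> is_word b w /\ length w = m.
Proof.
  revert w; induction m; intros w H.
  - simpl in H. destruct H as [<-|[]]. split; [constructor|reflexivity].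
  - rewrite words_S in H. apply in_flat_map in H as [v [Hv Hw]].
    apply in_map_iff in Hw as [a [<- Ha]]. apply in_seq in Ha.
    destruct (IHm v Hv) as [H1 H2]. split.
    + unfold is_word; apply Forall_app; split; [exact H1|]. constructor; [lia|constructor].
    + rewrite length_app; simpl; lia.
Qed.

Lemma NoDup_flat_map' {A B : Type} (f : A -> list B) l :
  (forall x, In x l -> NoDup (f x)) -> NoDup l ->
  (forall x y z, In x l -> In y l -> In z (f x) -> In z (f y) -> x = y) ->
  NoDup (flat_map f l).
Proof.
  induction l as [|x l IH]; intros H1 H2 H3; simpl; [constructor|].
  inversion H2; subst. apply NoDup_app.
  - apply H1; left; auto.
  - apply IH; auto. intros; apply H1; right; auto. intros; eapply H3; eauto; right; auto.
  - intros z Hz Hz'. apply in_flat_map in Hz' as [y [Hy Hzy]].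
    assert (x = y) by (eapply H3; eauto; [left|right]; auto). subst; tauto.
Qed.

Lemma words_NoDup b m : NoDup (words b m).
Proof.
  induction m; simpl. { constructor; [simpl; tauto|constructor]. }
  apply NoDup_flat_map'; auto.
  - intros x _. apply NoDup_map_NoDup_ForallPairs; [|apply seq_NoDup].
    intros a a' _ _ E. apply app_inj_tail in E; tauto.
  - intros x y z _ _ Hx Hy. apply in_map_iff in Hx as [a [<- _]].
    apply in_map_iff in Hy as [a' [E _]]. apply app_inj_tail in E; intuition.
Qed.

Lemma INRb_pos b : (2 <= b)%nat -> 0 < INR b.
Proof. intros; apply lt_0_INR; lia. Qed.

Lemma left_pt_app b w a : (2 <= b)%nat ->
  left_pt b (w ++ [a]) = left_pt b w + INR a / INR b ^ S (length w).
Proof.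
  intros Hb. pose proof (INRb_pos b Hb).
  induction w as [|x w IH]; simpl.
  - field. lra.
  - rewrite IH. simpl pow. field. split; [apply pow_nonzero|]; lra.
Qed.

Lemma left_bounds b w : (2 <= b)%nat -> is_word b w ->
  0 <= left_pt b w /\ left_pt b w + / INR b ^ length w <= 1.
Proof.
  intros Hb. pose proof (INRb_pos b Hb).
  induction w as [|a w IH]; intros Hw; simpl.
  - lra.
  - inversion Hw; subst. destruct (IH H3) as [I1 I2].
    assert (Ha : INR a + 1 <= INR b) by (rewrite <- S_INR; apply le_INR; lia).
    pose proof (pos_INR a).
    split.
    + apply Rmult_le_pos; [lra|]. left; apply Rinv_0_lt_compat; lra.
    + assert (E : (INR a + left_pt b w) / INR b + / (INR b * INR b ^ length w)
               = (INR a + (left_pt b w + / INR b ^ length w)) / INR b).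
      { field. split; [apply pow_nonzero|]; lra. }
      rewrite E. apply Rmult_le_reg_r with (INR b); [lra|].
      unfold Rdiv; rewrite Rmult_assoc, Rinv_l; lra.
Qed.

Lemma disjoint b w1 w2 : (2 <= b)%nat -> is_word b w1 -> is_word b w2 ->
  length w1 = length w2 -> w1 <> w2 ->
  left_pt b w1 + / INR b ^ length w1 <= left_pt b w2 \/
  left_pt b w2 + / INR b ^ length w1 <= left_pt b w1.
Proof.
  intros Hb. pose proof (INRb_pos b Hb).
  revert w2; induction w1 as [|a1 v1 IH]; intros w2 H1 H2 L N.
  - destruct w2; simpl in L; [tauto|lia].
  - destruct w2 as [|a2 v2]; simpl in L; [lia|]. injection L as L.
    inversion H1 as [|? ? Ha1 Hv1]; inversion H2 as [|? ? Ha2 Hv2]; subst.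
    pose proof (left_bounds b v1 Hb Hv1). pose proof (left_bounds b v2 Hb Hv2).
    pose proof (pow_lt (INR b) (length v1) H).
    assert (Eq : forall x y, (x + y) / INR b + / INR b ^ length (a1 :: v1) = (x + (y + / INR b ^ length v1)) / INR b).
    { intros; simpl; field; lra. }
    simpl left_pt. rewrite !Eq.
    assert (Hd : forall p q, p <= q -> p / INR b <= q / INR b).
    { intros; unfold Rdiv; apply Rmult_le_compat_r; [left; apply Rinv_0_lt_compat|]; lra. }
    destruct (Nat.eq_dec a1 a2) as [<-|Na].
    +
      assert (Nv : v1 <> v2) by congruence; destruct (IH v2 Hv1 Hv2 L Nv) as [X|X]; [left|right]; apply Hd; rewrite <- ?L in *; lra.
    + destruct (Nat.lt_ge_cases a1 a2) as [Lt|Ge].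
      * left; apply Hd. assert (INR a1 + 1 <= INR a2) by (rewrite <- S_INR; apply le_INR; lia). lra.
      * right; apply Hd. assert (INR a2 + 1 <= INR a1) by (rewrite <- S_INR; apply le_INR; lia). rewrite <- L in *. lra.
Qed.


Definition Bsum b d t m :=
  sumR (fun w => ifP (left_pt b w < t) (gamma b d w)) (words b m).

Lemma gamma_nonneg b d w : (2 <= b)%nat -> martingale b d -> is_word b w -> 0 <= gamma b d w.
Proof.
  intros Hb [Hp _] Hw. unfold gamma. pose proof (INRb_pos b Hb).
  apply Rmult_le_pos; [auto|]. left; apply Rinv_0_lt_compat, pow_lt; lra.
Qed.

Lemma gamma_children b d w : (2 <= b)%nat -> martingale b d -> is_word b w ->
  sumR (fun a => gamma b d (w ++ [a])) (seq 0 b) = gamma b d w.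
Proof.
  intros Hb [_ Hm] Hw. pose proof (INRb_pos b Hb).
  pose proof (pow_lt (INR b) (length w) H).
  rewrite (sumR_ext _ (fun a => / INR b ^ S (length w) * d (w ++ [a]))).
  2:{ intros a _. unfold gamma. rewrite length_app. simpl length.
      rewrite Nat.add_1_r. unfold Rdiv. apply Rmult_comm. }
  rewrite sumR_scal. unfold gamma. rewrite (Hm w Hw). simpl pow. field. lra.
Qed.

Lemma ifP_le P x : 0 <= x -> ifP P x <= x.
Proof. intros; unfold ifP; destruct (excluded_middle_informative P); lra. Qed.
Lemma ifP_ge P x : 0 <= x -> 0 <= ifP P x.
Proof. intros; unfold ifP; destruct (excluded_middle_informative P); lra. Qed.

Section AB.
Variables (b : nat) (d : list nat -> R) (Hb : (2 <= b)%nat) (Hm : martingale b d).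

Lemma A_step t m : cdf_approx b d t m <= cdf_approx b d t (S m).
Proof.
  unfold cdf_approx. rewrite words_S, sumR_flat_map.
  apply sumR_le. intros w Hw. rewrite sumR_map.
  destruct (words_in _ _ _ Hw) as [Hw1 Hw2].
  pose proof (INRb_pos b Hb).
  destruct (classic (left_pt b w + / INR b ^ m <= t)) as [C|C].
  - rewrite ifP_T by auto. rewrite <- (gamma_children b d w) by auto.
    right. apply sumR_ext. intros a Ha. apply in_seq in Ha.
    rewrite ifP_T; auto. rewrite left_pt_app by auto.
    assert (INR a + 1 <= INR b) by (rewrite <- S_INR; apply le_INR; lia).
    rewrite Hw2. simpl pow.
    pose proof (pow_lt (INR b) m H).
    assert (E : / INR b ^ m = INR b / (INR b * INR b ^ m)) by (field; lra).
    rewrite E in C.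
    assert (INR a / (INR b * INR b ^ m) + / (INR b * INR b ^ m) <= INR b / (INR b * INR b ^ m)).
    { unfold Rdiv. rewrite <- Rmult_1_l with (r := / (INR b * INR b ^ m)) at 2.
      rewrite <- Rmult_plus_distr_r. apply Rmult_le_compat_r; [|lra].
      left; apply Rinv_0_lt_compat, Rmult_lt_0_compat; lra. }
    lra.
  - rewrite ifP_F by auto. apply sumR_ge0. intros a Ha. apply ifP_ge, gamma_nonneg; auto.
    apply in_seq in Ha. unfold is_word; apply Forall_app; split; auto. constructor; [lia|constructor].
Qed.

Lemma B_step t m : Bsum b d t (S m) <= Bsum b d t m.
Proof.
  unfold Bsum. rewrite words_S, sumR_flat_map.
  apply sumR_le. intros w Hw. rewrite sumR_map.
  destruct (words_in _ _ _ Hw) as [Hw1 Hw2].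
  pose proof (INRb_pos b Hb).
  assert (Hc : forall a, In a (seq 0 b) -> is_word b (w ++ [a])).
  { intros a Ha. apply in_seq in Ha. unfold is_word; apply Forall_app; split; auto. constructor; [lia|constructor]. }
  destruct (classic (left_pt b w < t)) as [C|C].
  - rewrite ifP_T by auto. rewrite <- (gamma_children b d w) by auto.
    apply sumR_le. intros a Ha. apply ifP_le, gamma_nonneg; auto.
  - rewrite ifP_F by auto. right. rewrite <- (Rmult_0_r 0).
    change (0 * 0) with (0 * 0).
    transitivity (sumR (fun _ : nat => 0) (seq 0 b)).
    + apply sumR_ext. intros a Ha. apply ifP_F. rewrite left_pt_app by auto.
      pose proof (pos_INR a). pose proof (pow_lt (INR b) (S (length w)) H).
      assert (0 <= INR a / INR b ^ S (length w)) by (apply Rmult_le_pos; [lra|left; apply Rinv_0_lt_compat; lra]).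
      lra.
    + clear. induction (seq 0 b); simpl; lra.
Qed.

Lemma AB_le t m : cdf_approx b d t m <= Bsum b d t m.
Proof.
  unfold cdf_approx, Bsum. apply sumR_le. intros w Hw.
  destruct (words_in _ _ _ Hw) as [Hw1 Hw2]. pose proof (INRb_pos b Hb).
  pose proof (pow_lt (INR b) m H). pose proof (Rinv_0_lt_compat _ H0).
  destruct (classic (left_pt b w + / INR b ^ m <= t)).
  - rewrite !ifP_T by (auto; lra). lra.
  - rewrite ifP_F by auto. apply ifP_ge, gamma_nonneg; auto.
Qed.

End AB.


Lemma sum_unique {A : Type} (P : A -> Prop) (f : A -> R) l K :
  NoDup l -> (forall x y, In x l -> In y l -> P x -> P y -> x = y) ->
  (forall x, In x l -> f x <= K) -> 0 <= K ->
  sumR (fun x => ifP (P x) (f x)) l <= K.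
Proof.
  induction l as [|x l IH]; intros N U F K0; simpl; [lra|].
  inversion N; subst.
  destruct (classic (P x)) as [Px|Px].
  - rewrite ifP_T by auto.
    rewrite (sumR_ext _ (fun _ => 0)).
    + assert (sumR (fun _ : A => 0) l = 0) by (clear; induction l; simpl; lra).
      pose proof (F x (or_introl eq_refl)). lra.
    + intros y Hy. apply ifP_F. intros Py.
      assert (x = y) by (apply U; simpl; auto). subst; tauto.
  - rewrite ifP_F by auto.
    assert (sumR (fun x0 : A => ifP (P x0) (f x0)) l <= K).
    { apply IH; auto. intros; apply U; simpl; auto. intros; apply F; simpl; auto. }
    lra.
Qed.

Section K.
Variables (b : nat) (d : list nat -> R) (Hb : (2 <= b)%nat) (Hm : martingale b d).

Lemma B_mono t m k : (m <= k)%nat -> Bsum b d t k <= Bsum b d t m.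
Proof.
  induction 1; [lra|]. pose proof (B_step b d Hb Hm t m0). lra.
Qed.

Lemma cdf_spec t m : cdf_approx b d t m <= cdf b d t <= Bsum b d t m.
Proof.
  set (u := cdf_approx b d t).
  assert (gr : Un_growing u) by (intro n; apply A_step; auto).
  assert (ub : has_ub u).
  { exists (Bsum b d t 0). intros x [i ->]. unfold u.
    pose proof (AB_le b d Hb Hm t i). pose proof (B_mono t 0 i (Nat.le_0_l i)). lra. }
  destruct (growing_cv u gr ub) as [l Hl].
  assert (Hc : Un_cv u (cdf b d t)).
  { unfold cdf. apply epsilon_spec. exists l. exact Hl. }
  split.
  - apply (growing_ineq u); auto.
  - apply (Rle_cv_lim (Un := u) (Vn := fun _ => Bsum b d t m)); auto.
    + intros k. destruct (Nat.le_ge_cases k m).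
      * pose proof (tech9 u gr k m H). pose proof (AB_le b d Hb Hm t m). unfold u in *. lra.
      * pose proof (B_mono t m k H). pose proof (AB_le b d Hb Hm t k). unfold u in *. lra.
    + intros e He. exists 0%nat. intros. unfold Rdist. rewrite Rminus_diag, Rabs_R0. auto.
Qed.

Lemma BA_le t m K : 0 <= K -> (forall w, In w (words b m) -> gamma b d w <= K) ->
  Bsum b d t m - cdf_approx b d t m <= K.
Proof.
  intros K0 HK. unfold Bsum, cdf_approx. rewrite <- sumR_minus.
  pose proof (INRb_pos b Hb). pose proof (pow_lt (INR b) m H).
  pose proof (Rinv_0_lt_compat _ H0).
  rewrite (sumR_ext _ (fun w => ifP (left_pt b w < t /\ t < left_pt b w + / INR b ^ m) (gamma b d w))).
  - apply sum_unique; auto.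
    + apply words_NoDup.
    + intros x y Hx Hy Px Py. destruct (words_in _ _ _ Hx) as [Wx Lx].
      destruct (words_in _ _ _ Hy) as [Wy Ly].
      destruct (list_eq_dec Nat.eq_dec x y) as [|Nxy]; auto.
      destruct (disjoint b x y Hb Wx Wy ltac:(congruence) Nxy); rewrite Lx in *; lra.
  - intros w Hw. destruct (words_in _ _ _ Hw) as [W L].
    destruct (classic (left_pt b w + / INR b ^ m <= t)).
    + rewrite (ifP_T (_ <= _)) by auto. rewrite (ifP_T (_ < _)) by lra.
      rewrite ifP_F by (intros [? ?]; lra). lra.
    + rewrite (ifP_F (_ <= _)) by auto.
      destruct (classic (left_pt b w < t)).
      * rewrite (ifP_T (_ < _)) by auto. rewrite ifP_T by (split; lra). lra.
      * rewrite (ifP_F (_ < _)) by auto. rewrite ifP_F by (intros [? ?]; lra). lra.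
Qed.

Lemma mu_m_eq m y :
  mu_m b d m y = Bsum b d (left_pt 2 y + / 2 ^ length y) m - cdf_approx b d (left_pt 2 y) m.
Proof.
  unfold mu_m, Bsum, cdf_approx. rewrite <- sumR_minus. apply sumR_ext.
  intros w Hw. destruct (words_in _ _ _ Hw) as [W L].
  pose proof (INRb_pos b Hb). pose proof (pow_lt (INR b) m H).
  pose proof (Rinv_0_lt_compat _ H0).
  pose proof (pow_lt 2 (length y) ltac:(lra)).
  pose proof (Rinv_0_lt_compat _ H2).
  assert (I2 : INR 2 = 2) by (simpl; lra).
  assert (Eq : (exists z, in_cyl b w z /\ in_cyl 2 y z) <->
     (left_pt b w < left_pt 2 y + / 2 ^ length y /\ left_pt 2 y < left_pt b w + / INR b ^ m)).
  { unfold in_cyl. rewrite I2, L. split.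
    - intros [z [Z1 Z2]]. lra.
    - intros [Z1 Z2]. exists (Rmax (left_pt b w) (left_pt 2 y)).
      unfold Rmax; destruct (Rle_dec (left_pt b w) (left_pt 2 y)); lra. }
  destruct (classic (left_pt b w + / INR b ^ m <= left_pt 2 y)).
  - rewrite (ifP_T (_ <= _)) by auto. rewrite (ifP_T (_ < _)) by lra.
    rewrite ifP_F by (rewrite Eq; intros [? ?]; lra). lra.
  - rewrite (ifP_F (_ <= _)) by auto.
    destruct (classic (left_pt b w < left_pt 2 y + / 2 ^ length y)).
    + rewrite (ifP_T (_ < _)) by auto. rewrite ifP_T by (rewrite Eq; split; lra). lra.
    + rewrite (ifP_F (_ < _)) by auto. rewrite ifP_F by (rewrite Eq; intros [? ?]; lra). lra.
Qed.

Lemma key y m K : 0 <= K -> (forall w, In w (words b m) -> gamma b d w <= K) ->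
  Rabs (dd2 b d y - dd2_m b d m y) <= 2 ^ length y * (2 * K).
Proof.
  intros K0 HK. unfold dd2, dd2_m. rewrite <- Rmult_minus_distr_l.
  rewrite Rabs_mult, Rabs_right by (left; apply pow_lt; lra).
  apply Rmult_le_compat_l; [left; apply pow_lt; lra|].
  rewrite mu_m_eq. unfold mu.
  set (l := left_pt 2 y). set (r := l + / 2 ^ length y).
  pose proof (cdf_spec l m). pose proof (cdf_spec r m).
  pose proof (BA_le l m K K0 HK). pose proof (BA_le r m K K0 HK).
  rewrite Rabs_left1; lra.
Qed.

End K.


Lemma ceil_bounds x : 0 <= x -> x <= INR (Z.to_nat (ceilZ x)) < x + 1.
Proof.
  intros Hx. destruct (base_Int_part (- x)) as [H1 H2].
  unfold ceilZ. set (z := Int_part (- x)) in *.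
  assert (Hz : (0 <= - z)%Z).
  { apply le_IZR. rewrite opp_IZR. simpl. lra. }
  rewrite INR_IZR_INZ, Z2Nat.id by exact Hz. rewrite opp_IZR. lra.
Qed.

Lemma exp_le x y : x <= y -> exp x <= exp y.
Proof. intros [H|H]; [left; apply exp_increasing; auto|subst; lra]. Qed.

Lemma ln_le x y : 0 < x -> x <= y -> ln x <= ln y.
Proof. intros H [H'|H']; [left; apply ln_increasing; auto|subst; lra]. Qed.

Lemma ln_le_id x : 0 < x -> ln x <= x - 1.
Proof. intros H. pose proof (exp_ineq1_le (ln x)). rewrite exp_ln in H0; lra. Qed.

Lemma ln_nonneg x : 1 <= x -> 0 <= ln x.
Proof. intros H. rewrite <- ln_1. apply ln_le; lra. Qed.


Lemma div_le a b c : 0 < c -> a <= b * c -> a / c <= b.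
Proof.
  intros Hc H. apply Rmult_le_reg_r with c; auto.
  unfold Rdiv; rewrite Rmult_assoc, Rinv_l by lra. lra.
Qed.

Theorem mainTheorem8 (b : nat) (d : list nat -> R) (c : R) :
  (2 <= b)%nat ->
  martingale b d ->
  d nil = 1 ->
  (forall w, is_word b w -> w <> nil -> d w <= Rpower (INR (length w)) c) ->
  exists c' : R, 0 < c' /\
    exists N : nat, forall y : list nat, is_word 2 y -> (N <= length y)%nat ->
      Rabs (dd2 b d y - dd2_m b d (m_of b c' y) y) <= 1 / INR (length y) ^ 3.
Proof.
  intros Hb Hm Hd1 Hbound.
  pose proof (INRb_pos b Hb) as Hb0.
  pose proof ln_lt_2 as Hl2.
  assert (Hb2 : 2 <= INR b).
  { replace 2 with (INR 2) by (simpl; lra). apply le_INR; auto. }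
  assert (Hlb : ln 2 <= ln (INR b)) by (apply ln_le; lra).
  set (E := Rabs c + 4).
  assert (HE : 4 <= E) by (unfold E; pose proof (Rabs_pos c); lra).
  set (c' := E * ln 2 / ln (INR b)).
  assert (Hc' : 0 < c').
  { unfold c'. unfold Rdiv. apply Rmult_lt_0_compat; [nra|]. apply Rinv_0_lt_compat; lra. }
  set (Kc := 2 + 2 * c').
  destruct (INR_archimed 1 (2 * exp (Rabs c * ln Kc)) ltac:(lra)) as [N0 HN0].
  exists c'. split; [exact Hc'|]. exists (S N0).
  intros y Hy HN. set (n := length y) in *.
  assert (HnN : INR (S N0) <= INR n) by (apply le_INR; auto).
  rewrite S_INR in HnN. pose proof (pos_INR N0).
  assert (Hn1 : 1 <= INR n) by lra.
  assert (HnA : 2 * exp (Rabs c * ln Kc) <= INR n) by lra.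
  assert (Hlnn : ln 2 + Rabs c * ln Kc <= ln (INR n)).
  { rewrite <- (ln_exp (Rabs c * ln Kc)), <- ln_mult by (try apply exp_pos; lra).
    apply ln_le; auto. apply Rmult_lt_0_compat; [lra|apply exp_pos]. }
  set (x := INR n / log2 (INR b) + c' * log2 (INR n)).
  assert (Hlnn0 : 0 <= ln (INR n)) by (apply ln_nonneg; lra).
  assert (Hx1 : INR n / log2 (INR b) = INR n * ln 2 / ln (INR b)).
  { unfold log2. field. lra. }
  assert (Hxeq : x * ln (INR b) = INR n * ln 2 + E * ln (INR n)).
  { unfold x, c', log2. field. lra. }
  assert (Hx0 : 0 < x).
  { unfold x. rewrite Hx1. unfold log2.
    assert (0 < INR n * ln 2 / ln (INR b)).
    { unfold Rdiv; apply Rmult_lt_0_compat; [nra|apply Rinv_0_lt_compat; lra]. }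
    assert (0 <= c' * (ln (INR n) / ln 2)).
    { apply Rmult_le_pos; [lra|]. unfold Rdiv; apply Rmult_le_pos; [lra|left; apply Rinv_0_lt_compat; lra]. }
    lra. }
  set (m := m_of b c' y).
  assert (Hmx : x <= INR m < x + 1).
  { unfold m, m_of. fold n. fold x. apply ceil_bounds. lra. }
  assert (Hm1 : (1 <= m)%nat).
  { destruct m; [simpl in Hmx; lra|lia]. }
  assert (HmR : 1 <= INR m) by (replace 1 with (INR 1) by reflexivity; apply le_INR; auto).
  assert (HmK : INR m <= Kc * INR n).
  { assert (T1 : INR n / log2 (INR b) <= INR n).
    { rewrite Hx1. apply div_le; [lra|]. nra. }
    assert (T2 : log2 (INR n) <= 2 * INR n).
    { unfold log2. apply div_le; [lra|]. pose proof (ln_le_id (INR n) ltac:(lra)). nra. }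
    unfold x in Hmx. unfold Kc. nra. }
  set (Kg := Rpower (INR m) c / INR b ^ m).
  assert (Hbm : 0 < INR b ^ m) by (apply pow_lt; lra).
  assert (HKg : 0 <= Kg).
  { unfold Kg, Rpower, Rdiv. apply Rmult_le_pos; [left; apply exp_pos|left; apply Rinv_0_lt_compat; lra]. }
  apply Rle_trans with (2 ^ n * (2 * Kg)).
  { apply key; auto. intros w Hw. destruct (words_in _ _ _ Hw) as [W L].
    unfold gamma, Kg. rewrite L. unfold Rdiv. apply Rmult_le_compat_r.
    - left; apply Rinv_0_lt_compat; lra.
    - rewrite <- L. apply Hbound; auto. intros ->. simpl in L. lia. }
  assert (Q1 : 2 ^ n = exp (INR n * ln 2)) by (rewrite <- Rpower_pow by lra; reflexivity).
  assert (Q2 : INR b ^ m = exp (INR m * ln (INR b))) by (rewrite <- Rpower_pow by lra; reflexivity).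
  assert (Q3 : INR n ^ 3 = exp (INR 3 * ln (INR n))) by (rewrite <- Rpower_pow by lra; reflexivity).
  assert (Heq : 2 ^ n * (2 * Kg) = exp (INR n * ln 2 + ln 2 + c * ln (INR m) - INR m * ln (INR b))).
  { unfold Kg, Rpower. rewrite Q1, Q2. unfold Rminus. rewrite !exp_plus, exp_Ropp, exp_ln by lra.
    field. apply Rgt_not_eq, exp_pos. }
  assert (Heq2 : 1 / INR n ^ 3 = exp (- (INR 3 * ln (INR n)))).
  { rewrite Q3, exp_Ropp. unfold Rdiv; ring. }
  rewrite Heq, Heq2. apply exp_le.
  assert (F1 : INR n * ln 2 + Rabs c * ln (INR n) + 4 * ln (INR n) <= INR m * ln (INR b)).
  { replace (INR n * ln 2 + Rabs c * ln (INR n) + 4 * ln (INR n)) with (x * ln (INR b))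
      by (rewrite Hxeq; unfold E; ring).
    apply Rmult_le_compat_r; lra. }
  assert (HKc : 0 < Kc) by (unfold Kc; lra).
  assert (Hlm : ln (INR m) <= ln Kc + ln (INR n)).
  { rewrite <- ln_mult by lra. apply ln_le; lra. }
  assert (Hlm0 : 0 <= ln (INR m)) by (apply ln_nonneg; lra).
  assert (F2 : c * ln (INR m) <= Rabs c * ln Kc + Rabs c * ln (INR n)).
  { pose proof (Rle_abs c). pose proof (Rabs_pos c).
    apply Rle_trans with (Rabs c * ln (INR m)); [apply Rmult_le_compat_r; lra|].
    rewrite <- Rmult_plus_distr_l. apply Rmult_le_compat_l; lra. }
  replace (INR 3) with 3 by (simpl; lra).
  lra.
Qed.
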